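(* Let $r\ge1$, $\mu\in\mathcal P_r$, $n\in\mathbb N$ and $\mathbf p\in\Pi_n$. If $r=1$ or ${\rm supp}\,\mu$ is connected, then there exists $\mathbf x\in\Xi_n$ minimizing $\mathbf y\mapsto d_r(\delta^{\mathbf p}_{\mathbf y},\mu)$ over $\Xi_n$ such that ${\rm supp}\,\delta^{\mathbf p}_{\mathbf x}\subset{\rm supp}\,\mu$.
   Context: $\mathcal P$ denotes the set of Borel probability measures on $\mathbb R$; $\mathcal P_r=\{\mu\in\mathcal P:\int|x|^r{\rm d}\mu(x)<\infty\}$. For $\mu\in\mathcal P$, $F_\mu(x)=\mu(]-\infty,x])$ and $F_\mu^{-1}(t)=\sup\{x: F_\mu(x)\le t\}$, $t\in]0,1[$; ${\rm supp}$ denotes support. $d_r(\mu,\nu)=\big(\int_0^1|F_\mu^{-1}(t)-F_\nu^{-1}(t)|^r{\rm d}t\big)^{1/r}$. $\Xi_n=\{\mathbf x\in\mathbb R^n:x_1\le\dots\le x_n\}$, $\Pi_n=\{\mathbf p\in\mathbb R^n:p_i\ge0,\sum_ip_i=1\}$, $\delta^{\mathbf p}_{\mathbf x}=\sum_ip_i\delta_{x_i}$. *)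

(* Defs.v *)
From Stdlib Require Import Reals Lra ClassicalEpsilon.
Open Scope R_scope.

(** A Borel probability measure on R is represented by its distribution
    function F = F_mu (bijective correspondence). *)
Definition is_cdf (F : R -> R) : Prop :=
  (forall x y, x <= y -> F x <= F y) /\
  (forall x eps, 0 < eps -> exists d, 0 < d /\
       forall y, x <= y < x + d -> Rabs (F y - F x) < eps) /\
  (forall eps, 0 < eps -> exists M, forall x, x <= M -> Rabs (F x) < eps) /\
  (forall eps, 0 < eps -> exists M, forall x, M <= x -> Rabs (F x - 1) < eps).

(** Quantile F^{-1}(t) = sup {x : F x <= t} (meaningful for t in ]0,1[). *)
Definition quantile (F : R -> R) (t : R) : R :=
  epsilon (inhabits 0) (fun q => is_lub (fun x => F x <= t) q).

Definition powr (a r : R) : R := if Rle_dec a 0 then 0 else Rpower a r.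

(** [int01 f I]: I is the (finite) integral over ]0,1[ of the nonnegative
    function f, defined as the supremum of Riemann integrals over compact
    subintervals [a,b] of ]0,1[ (= Lebesgue integral for nonnegative f that
    is Riemann integrable on compact subintervals). If the integral is
    +infinity, there is no such I. *)
Definition int01 (f : R -> R) (I : R) : Prop :=
  is_lub (fun v => exists a b (pr : Riemann_integrable f a b),
                      0 < a /\ a <= b /\ b < 1 /\ v = RiemannInt pr) I.

(** [dr_pow r F G c]: c = d_r(mu,nu)^r where F = F_mu, G = F_nu. *)
Definition dr_pow (r : R) (F G : R -> R) (c : R) : Prop :=
  int01 (fun t => powr (Rabs (quantile F t - quantile G t)) r) c.

(** mu in P_r : int |x|^r dmu = int_0^1 |F^{-1}(t)|^r dt < infinity. *)
Definition finite_moment (r : R) (F : R -> R) : Prop :=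
  exists c, int01 (fun t => powr (Rabs (quantile F t)) r) c.

(** Support of mu: x with mu(]x-eps,x+eps[) > 0 for all eps > 0
    (equivalently F(x-eps) < F(x+eps) for all eps > 0). *)
Definition supp (F : R -> R) (x : R) : Prop :=
  forall eps, 0 < eps -> F (x - eps) < F (x + eps).

(** Connected subsets of R = intervals (order-convex sets). *)
Definition connected_set (S : R -> Prop) : Prop :=
  forall a b c, S a -> S b -> a <= c <= b -> S c.

Fixpoint sumR (n : nat) (f : nat -> R) : R :=
  match n with O => 0 | S m => sumR m f + f m end.

(** Pi_n and Xi_n; vectors of length n are functions on indices < n. *)
Definition in_Pi (n : nat) (p : nat -> R) : Prop :=
  (forall i, (i < n)%nat -> 0 <= p i) /\ sumR n p = 1.

Definition in_Xi (n : nat) (x : nat -> R) : Prop :=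
  forall i j, (i <= j < n)%nat -> x i <= x j.

(** Distribution function of delta^p_x = sum_i p_i delta_{x_i}. *)
Definition discrete_cdf (n : nat) (p x : nat -> R) (y : R) : R :=
  sumR n (fun i => if Rle_dec (x i) y then p i else 0).

(** x minimizes y |-> d_r(delta^p_y, mu) over Xi_n (equivalently d_r^r). *)
Definition is_minimizer (r : R) (F : R -> R) (n : nat) (p x : nat -> R) : Prop :=
  exists c, dr_pow r (discrete_cdf n p x) F c /\
    forall y c', in_Xi n y -> dr_pow r (discrete_cdf n p y) F c' -> c <= c'.

(* Main.v *)
Require Import Defs.
From Stdlib Require Import Reals Lra Lia ClassicalEpsilon Classical.
From Coquelicot Require Import Coquelicot.
From Stdlib Require Import RList Arith.
Open Scope R_scope.

Lemma Rdiv_le_0_compat a b : 0 <= a -> 0 < b -> 0 <= a / b.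
Proof. intros. unfold Rdiv. apply Rmult_le_pos; [auto|left; apply Rinv_0_lt_compat; auto]. Qed.

Lemma powr_nonneg a r : 0 <= powr a r.
Proof. unfold powr. destruct (Rle_dec a 0); [lra|]. unfold Rpower. left; apply exp_pos. Qed.

Lemma powr_pos a r : 0 < a -> powr a r = Rpower a r.
Proof. intro. unfold powr. destruct (Rle_dec a 0); [lra|auto]. Qed.

Lemma powr_le0 a r : a <= 0 -> powr a r = 0.
Proof. intro. unfold powr. destruct (Rle_dec a 0); [auto|lra]. Qed.

Lemma powr_mono a b r : 0 <= r -> a <= b -> powr a r <= powr b r.
Proof.
  intros Hr Hab. destruct (Rle_dec a 0).
  - rewrite powr_le0 by auto. apply powr_nonneg.
  - rewrite !powr_pos by lra. apply Rle_Rpower_l; lra.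
Qed.

Lemma powr_1 a : 0 <= a -> powr a 1 = a.
Proof. intros. destruct (Req_dec a 0) as [->|]. apply powr_le0; lra. rewrite powr_pos by lra. apply Rpower_1; lra. Qed.

Lemma powr_mul k a r : 0 < k -> 0 <= a -> powr (k * a) r = Rpower k r * powr a r.
Proof.
  intros Hk Ha. destruct (Req_dec a 0) as [->|].
  - rewrite Rmult_0_r, !powr_le0 by lra. ring.
  - rewrite !powr_pos by nra. rewrite Rpower_mult_distr; auto; lra.
Qed.

Lemma powr_ge_id a r : 1 <= r -> 1 <= a -> a <= powr a r.
Proof.
  intros Hr Ha. rewrite powr_pos by lra.
  rewrite <- (Rpower_1 a) at 1 by lra. apply Rle_Rpower; lra.
Qed.

Lemma bernoulli x r : 1 <= r -> 0 <= x -> 1 + r * (x - 1) <= powr x r.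
Proof.
  intros Hr Hx. destruct (Req_dec x 0) as [->|Hx0].
  - rewrite powr_le0 by lra. lra.
  - rewrite powr_pos by lra. unfold Rpower.
    set (y := r * ln x). set (m := y / r).
    assert (Hm : m = ln x) by (unfold m, y; field; lra).
    assert (H1 := exp_ineq1_le (y - m)).
    assert (H2 := exp_ineq1_le (0 - m)).
    assert (E1 : exp y = exp m * exp (y - m)) by (rewrite <- exp_plus; f_equal; ring).
    assert (E2 : exp 0 = exp m * exp (0 - m)) by (rewrite <- exp_plus; f_equal; ring).
    rewrite exp_0 in E2.
    assert (Hem : exp m = x) by (rewrite Hm; apply exp_ln; lra).
    assert (Hep : 0 < exp m) by apply exp_pos.
    assert (A : exp m * (1 + (y - m)) <= exp y) by (rewrite E1; apply Rmult_le_compat_l; lra).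
    assert (B : exp m * (1 + (0 - m)) <= 1) by (rewrite E2; apply Rmult_le_compat_l; lra).
    assert (C : exp m * ((1/r) * (1 + (y - m)) + (1 - 1/r) * (1 + (0 - m))) <= (1/r) * exp y + (1 - 1/r) * 1).
    { assert (0 <= 1/r) by (apply Rdiv_le_0_compat; lra).
      assert (0 <= 1 - 1/r).
      { assert (1/r <= 1). { apply (Rmult_le_reg_l r); [lra|]. field_simplify; lra. } lra. }
      replace (exp m * (1 / r * (1 + (y - m)) + (1 - 1 / r) * (1 + (0 - m))))
        with ((1/r) * (exp m * (1 + (y - m))) + (1 - 1/r) * (exp m * (1 + (0 - m)))) by ring.
      apply Rplus_le_compat; apply Rmult_le_compat_l; auto. }
    assert (D : (1/r) * (1 + (y - m)) + (1 - 1/r) * (1 + (0 - m)) = 1) by (unfold m; field; lra).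
    rewrite D, Rmult_1_r, Hem in C.
    assert (x * r <= exp y + (r - 1)).
    { apply (Rmult_le_reg_l (1/r)). apply Rdiv_lt_0_compat; lra.
      replace (1 / r * (x * r)) with x by (field; lra).
      replace (1 / r * (exp y + (r - 1))) with (1 / r * exp y + (1 - 1 / r) * 1) by (field; lra). lra. }
    lra.
Qed.

Lemma tangent u m r : 1 <= r -> 0 <= u -> 0 < m ->
  powr m r + r * (powr m r / m) * (u - m) <= powr u r.
Proof.
  intros Hr Hu Hm.
  assert (E : powr u r = powr m r * powr (u / m) r).
  { replace u with (m * (u/m)) at 1 by (field; lra). rewrite powr_mul; auto.
    rewrite (powr_pos m r Hm). reflexivity. apply Rdiv_le_0_compat; lra. }
  rewrite E. assert (B := bernoulli (u/m) r Hr ltac:(apply Rdiv_le_0_compat; lra)).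
  assert (P := powr_nonneg m r).
  apply Rle_trans with (powr m r * (1 + r * (u / m - 1))).
  - right. field. lra.
  - apply Rmult_le_compat_l; auto.
Qed.

Lemma powr_convex s t l r : 1 <= r -> 0 <= s -> 0 <= t -> 0 <= l <= 1 ->
  powr (l * s + (1 - l) * t) r <= l * powr s r + (1 - l) * powr t r.
Proof.
  intros Hr Hs Ht Hl. set (M := l * s + (1 - l) * t).
  assert (HM : 0 <= M) by (unfold M; nra).
  destruct (Req_dec M 0) as [E|HM0].
  - rewrite E, powr_le0 by lra. assert (A := powr_nonneg s r). assert (B := powr_nonneg t r). nra.
  - assert (T1 := tangent s M r Hr Hs ltac:(lra)). assert (T2 := tangent t M r Hr Ht ltac:(lra)).
    apply Rle_trans with (l * (powr M r + r * (powr M r / M) * (s - M)) + (1 - l) * (powr M r + r * (powr M r / M) * (t - M))).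
    + right. set (K := r * (powr M r / M)). assert (EM : l * s + (1 - l) * t - M = 0) by (unfold M; ring). transitivity (powr M r + K * (l * s + (1 - l) * t - M)); [rewrite EM; ring|ring].
    + apply Rplus_le_compat; apply Rmult_le_compat_l; lra.
Qed.

Definition Phi (r u : R) := powr (Rabs u) r.

Lemma Phi_nonneg r u : 0 <= Phi r u.
Proof. apply powr_nonneg. Qed.

Lemma Phi_convex r a b l : 1 <= r -> 0 <= l <= 1 ->
  Phi r (l * a + (1 - l) * b) <= l * Phi r a + (1 - l) * Phi r b.
Proof.
  intros Hr Hl. unfold Phi.
  apply Rle_trans with (powr (l * Rabs a + (1 - l) * Rabs b) r).
  - apply powr_mono; [lra|]. eapply Rle_trans; [apply Rabs_triang|].
    rewrite !Rabs_mult. rewrite (Rabs_right l), (Rabs_right (1 - l)) by lra. lra.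
  - apply powr_convex; auto; apply Rabs_pos.
Qed.

Lemma Phi_bound r z w : 1 <= r -> Phi r (z - w) <= Rpower 2 r * (Phi r z + Phi r w).
Proof.
  intros Hr. unfold Phi. set (M := Rmax (Rabs z) (Rabs w)).
  assert (HM : 0 <= M) by (unfold M; apply Rle_trans with (Rabs z); [apply Rabs_pos|apply Rmax_l]).
  apply Rle_trans with (powr (2 * M) r).
  - apply powr_mono; [lra|]. unfold Rminus. eapply Rle_trans; [apply Rabs_triang|].
    rewrite Rabs_Ropp. assert (Rabs z <= M) by apply Rmax_l. assert (Rabs w <= M) by apply Rmax_r. lra.
  - rewrite powr_mul by lra. apply Rmult_le_compat_l. unfold Rpower; left; apply exp_pos.
    assert (A := powr_nonneg (Rabs z) r). assert (B := powr_nonneg (Rabs w) r).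
    unfold M, Rmax. destruct (Rle_dec (Rabs z) (Rabs w)); lra.
Qed.

Lemma Phi_1 u : Phi 1 u = Rabs u.
Proof. unfold Phi. apply powr_1, Rabs_pos. Qed.
Fixpoint grid (k:nat) (x d:R) : list R :=
  match k with O => x :: nil | S k' => x :: grid k' (x + d) d end.
Fixpoint gvals (h:R->R) (k:nat) (x d:R) : list R :=
  match k with O => nil | S k' => h x :: gvals h k' (x+d) d end.

Lemma grid_len k x d : length (grid k x d) = S k.
Proof. revert x; induction k; intros; simpl; auto. Qed.
Lemma gvals_len h k x d : length (gvals h k x d) = k.
Proof. revert x; induction k; intros; simpl; auto. Qed.
Lemma grid_pos k x d i : (i <= k)%nat -> pos_Rl (grid k x d) i = x + INR i * d.
Proof.
  revert x i; induction k; intros x i Hi; destruct i; cbn [grid pos_Rl].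
  - simpl; ring.
  - lia.
  - simpl; ring.
  - rewrite IHk by lia. rewrite S_INR. ring.
Qed.
Lemma gvals_pos h k x d i : (i < k)%nat -> pos_Rl (gvals h k x d) i = h (x + INR i * d).
Proof.
  revert x i; induction k; intros x i Hi; [lia|]. destruct i; cbn [gvals pos_Rl].
  - f_equal; simpl; ring.
  - rewrite IHk by lia. f_equal. rewrite S_INR. ring.
Qed.

Lemma Int_SF_grid f b k x d : 0 <= d -> x + INR k * d <= b ->
  Int_SF (gvals (fun y => f (Rmin (y + d) b) - f y) k x d) (grid k x d)
  = d * (f (x + INR k * d) - f x).
Proof.
  revert x; induction k; intros x Hd Hb.
  - simpl. ring_simplify. replace (x + 0 * d) with x by ring. ring.
  - rewrite S_INR in Hb.
    assert (Hm : Rmin (x + d) b = x + d).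
    { apply Rmin_left. assert (0 <= INR k * d) by (apply Rmult_le_pos; [apply pos_INR|lra]). lra. }
    destruct k.
    + cbn [gvals grid Int_SF]. rewrite Hm. replace (INR 1) with 1 by reflexivity. replace (x + 1 * d) with (x + d) by ring. ring.
    + change (Int_SF (gvals (fun y => f (Rmin (y + d) b) - f y) (S (S k)) x d) (grid (S (S k)) x d))
       with ((f (Rmin (x + d) b) - f x) * (x + d - x) +
             Int_SF (gvals (fun y => f (Rmin (y + d) b) - f y) (S k) (x+d) d) (grid (S k) (x + d) d)).
      rewrite IHk; auto.
      * rewrite Hm. rewrite !S_INR. replace (x + d + (INR k + 1) * d) with (x + (INR k + 1 + 1) * d) by ring. ring.
      * replace (x + d + INR (S k) * d) with (x + (INR (S k) + 1) * d) by ring. lra.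
Qed.

Lemma grid_find k : forall x d t, 0 < d -> x <= t < x + INR k * d ->
  exists i, (i < k)%nat /\ x + INR i * d <= t < x + INR (S i) * d.
Proof.
  induction k; intros x d t Hd [H1 H2].
  - simpl in H2. lra.
  - destruct (Rlt_dec t (x + d)).
    + exists 0%nat. simpl. split; [lia|lra].
    + destruct (IHk (x + d) d t Hd) as [i [Hi1 Hi2]].
      { rewrite S_INR in H2. split; lra. }
      exists (S i). split; [lia|]. rewrite !S_INR in *. lra.
Qed.

Lemma mono_RI (f : R -> R) (a b : R) : a <= b ->
  (forall x y, a <= x -> x <= y -> y <= b -> f x <= f y) -> Riemann_integrable f a b.
Proof.
  intros Hab Hmon.
  destruct (Req_EM_T a b) as [<-|Hne]; [apply RiemannInt_P7|].
  assert (Hlt : a < b) by lra.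
  intro eps.
  assert (Hfab : f a <= f b) by (apply Hmon; lra).
  set (K := (b - a) * (f b - f a) + 1).
  assert (HK : 0 < K) by (unfold K; assert (0 <= (b - a) * (f b - f a)) by (apply Rmult_le_pos; lra); lra).
  assert (He : 0 < eps / K) by (apply Rdiv_lt_0_compat; [apply cond_pos|lra]).
  destruct (constructive_indefinite_description _ (archimed_cor1 _ He)) as [k [Hk1 Hk2]].
  assert (Hkpos : 0 < INR k) by (apply lt_0_INR; lia).
  set (d := (b - a) / INR k).
  assert (Hd : 0 < d) by (apply Rdiv_lt_0_compat; lra).
  assert (Hend : a + INR k * d = b) by (unfold d; field; lra).
  set (l := grid k a d).
  assert (Hord : ordered_Rlist l).
  { intros i Hi. unfold l in *. rewrite grid_len in Hi. simpl in Hi.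
    rewrite !grid_pos by lia. rewrite S_INR. lra. }
  assert (H0 : pos_Rl l 0 = a) by (unfold l; rewrite grid_pos by lia; simpl; ring).
  assert (Hl : pos_Rl l (pred (length l)) = b).
  { unfold l. rewrite grid_len. simpl. rewrite grid_pos by lia. exact Hend. }
  set (h := fun y => f (Rmin (y + d) b) - f y).
  destruct (@StepFun_P38 l a b f Hord H0 Hl) as [phi [Hphib Hphi]].
  destruct (@StepFun_P38 l a b h Hord H0 Hl) as [psi [Hpsib Hpsi]].
  exists phi, psi.
  assert (Hlen : pred (length l) = k) by (unfold l; rewrite grid_len; reflexivity).
  split.
  - intros t Ht. rewrite Rmin_left in Ht by lra. rewrite Rmax_right in Ht by lra.
    destruct (Req_dec t b) as [->|Htb].
    + rewrite Hphib, Hpsib. unfold h. rewrite Rmin_right by lra.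
      replace (f b - f b) with 0 by ring. rewrite Rabs_R0. lra.
    + destruct (grid_find k a d t Hd) as [i [Hi1 Hi2]]; [lra|].
      assert (Hpi : pos_Rl l i = a + INR i * d) by (unfold l; apply grid_pos; lia).
      assert (HpSi : pos_Rl l (S i) = a + INR (S i) * d) by (unfold l; apply grid_pos; lia).
      assert (Hco : co_interval (pos_Rl l i) (pos_Rl l (S i)) t) by (unfold co_interval; lra).
      rewrite (Hphi i ltac:(lia) t Hco), (Hpsi i ltac:(lia) t Hco).
      unfold h. rewrite Hpi.
      assert (HiS : a + INR (S i) * d <= b).
      { rewrite <- Hend. assert (INR (S i) <= INR k) by (apply le_INR; lia). nra. }
      rewrite S_INR in HiS, Hi2.
      rewrite Rmin_left by lra.
      assert (0 <= INR i * d) by (apply Rmult_le_pos; [apply pos_INR|lra]).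
      assert (f (a + INR i * d) <= f t) by (apply Hmon; lra).
      assert (f t <= f (a + INR i * d + d)) by (apply Hmon; lra).
      rewrite Rabs_right by lra. lra.
  - assert (Had : adapted_couple psi a b l (gvals h k a d)).
    { unfold adapted_couple. rewrite Rmin_left by lra. rewrite Rmax_right by lra.
      repeat split; auto.
      + unfold l; rewrite grid_len, gvals_len; reflexivity.
      + intros i Hi x Hx. rewrite Hlen in Hi.
        rewrite (Hpsi i ltac:(lia) x); [|unfold co_interval, open_interval in *; lra].
        rewrite gvals_pos by lia. unfold l. rewrite grid_pos by lia. reflexivity. }
    unfold RiemannInt_SF. destruct (Rle_dec a b); [|lra].
    rewrite (StepFun_P17 (StepFun_P1 psi) Had).
    unfold h, l. rewrite Int_SF_grid by lra. rewrite Hend.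
    rewrite Rabs_right.
    + unfold d. apply Rle_lt_trans with (K / INR k).
      * unfold K. unfold Rdiv. rewrite Rmult_comm, <- Rmult_assoc.
        apply Rmult_le_compat_r; [left; apply Rinv_0_lt_compat; lra|]. lra.
      * unfold Rdiv. apply Rmult_lt_reg_l with (/ K). apply Rinv_0_lt_compat; lra.
        rewrite <- Rmult_assoc, Rinv_l by lra. rewrite Rmult_1_l.
        rewrite Rmult_comm. lra.
    + apply Rle_ge, Rmult_le_pos; lra.
Qed.
Lemma ex_plusR f g a b : ex_RInt f a b -> ex_RInt g a b -> ex_RInt (fun t => f t + g t) a b.
Proof. intros. exact (ex_RInt_plus f g a b H H0). Qed.
Lemma RInt_plusR f g a b : ex_RInt f a b -> ex_RInt g a b -> RInt (fun t => f t + g t) a b = RInt f a b + RInt g a b.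
Proof. intros. exact (RInt_plus f g a b H H0). Qed.
Lemma ex_scalR k f a b : ex_RInt f a b -> ex_RInt (fun t => k * f t) a b.
Proof. intros. exact (ex_RInt_scal f a b k H). Qed.
Lemma RInt_scalR k f a b : ex_RInt f a b -> RInt (fun t => k * f t) a b = k * RInt f a b.
Proof. intros. exact (RInt_scal f a b k H). Qed.
Lemma ex_oppR f a b : ex_RInt f a b -> ex_RInt (fun t => - f t) a b.
Proof. intros. exact (ex_RInt_opp f a b H). Qed.
Lemma RInt_constR c a b : RInt (fun _ => c) a b = c * (b - a).
Proof. rewrite RInt_const. unfold scal; simpl. unfold mult; simpl. ring. Qed.

Definition qmono (q : R -> R) := forall s t, 0 < s -> s <= t -> t < 1 -> q s <= q t.

Lemma mono_ex f a b : a <= b -> (forall x y, a <= x -> x <= y -> y <= b -> f x <= f y) -> ex_RInt f a b.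
Proof. intros. apply ex_RInt_Reals_1. apply mono_RI; auto. Qed.

Lemma antimono_ex f a b : a <= b -> (forall x y, a <= x -> x <= y -> y <= b -> f y <= f x) -> ex_RInt f a b.
Proof.
  intros Hab H. apply (ex_RInt_ext (fun t => - - f t)).
  { intros; simpl; ring. }
  apply ex_oppR. apply mono_ex; auto. intros. apply Ropp_le_contravar. auto.
Qed.

Definition G (r : R) (q : R -> R) (z : R) (t : R) := powr (Rabs (z - q t)) r.

Lemma G_nonneg r q z t : 0 <= G r q z t.
Proof. apply powr_nonneg. Qed.

Lemma ex_G r q z u v : 0 <= r -> qmono q -> 0 < u -> u <= v -> v < 1 -> ex_RInt (G r q z) u v.
Proof.
  intros Hr Hq Hu Huv Hv.
  apply (ex_RInt_ext (fun t => powr (Rmax (z - q t) 0) r + powr (Rmax (q t - z) 0) r)).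
  { intros t _. unfold G. unfold Rmax. destruct (Rle_dec (z - q t) 0); destruct (Rle_dec (q t - z) 0).
    - replace (z - q t) with 0 by lra. rewrite Rabs_R0, powr_le0; lra.
    - rewrite (powr_le0 0) by lra. rewrite Rabs_left1 by lra. replace (-(z - q t)) with (q t - z) by ring. lra.
    - rewrite (powr_le0 0) by lra. rewrite Rabs_right by lra. lra.
    - lra. }
  apply ex_plusR.
  - apply antimono_ex; auto. intros x y Hx Hxy Hy. apply powr_mono; auto.
    assert (q x <= q y) by (apply Hq; lra). unfold Rmax.
    destruct (Rle_dec (z - q y) 0); destruct (Rle_dec (z - q x) 0); lra.
  - apply mono_ex; auto. intros x y Hx Hxy Hy. apply powr_mono; auto.
    assert (q x <= q y) by (apply Hq; lra). unfold Rmax.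
    destruct (Rle_dec (q x - z) 0); destruct (Rle_dec (q y - z) 0); lra.
Qed.

Lemma RInt_sub_le f c u v d : c <= u -> u <= v -> v <= d ->
  ex_RInt f c u -> ex_RInt f u v -> ex_RInt f v d ->
  (forall t, c <= t <= d -> 0 <= f t) -> RInt f u v <= RInt f c d.
Proof.
  intros H1 H2 H3 E1 E2 E3 Hp.
  rewrite <- (RInt_Chasles f c u d E1) by (apply (ex_RInt_Chasles f u v d); auto).
  rewrite <- (RInt_Chasles f u v d E2 E3).
  assert (0 <= RInt f c u) by (apply RInt_ge_0; auto; intros; apply Hp; lra).
  assert (0 <= RInt f v d) by (apply RInt_ge_0; auto; intros; apply Hp; lra).
  change (plus (RInt f c u) (plus (RInt f u v) (RInt f v d))) with (RInt f c u + (RInt f u v + RInt f v d)).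
  lra.
Qed.

Lemma RInt_G_sub r q z c u v d : 0 <= r -> qmono q -> 0 < c -> c <= u -> u <= v -> v <= d -> d < 1 ->
  RInt (G r q z) u v <= RInt (G r q z) c d.
Proof.
  intros. apply RInt_sub_le; auto; try (apply ex_G; auto; lra).
  intros; apply G_nonneg.
Qed.

Lemma sumR_le n f g : (forall i, (i < n)%nat -> f i <= g i) -> sumR n f <= sumR n g.
Proof. induction n; simpl; intros; [lra|]. apply Rplus_le_compat; auto. Qed.
Lemma sumR_ext n f g : (forall i, (i < n)%nat -> f i = g i) -> sumR n f = sumR n g.
Proof. induction n; simpl; intros; [lra|]. rewrite IHn by auto. rewrite H by lia. auto. Qed.
Lemma sumR_nonneg n f : (forall i, (i < n)%nat -> 0 <= f i) -> 0 <= sumR n f.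
Proof. induction n; simpl; intros; [lra|]. assert (0 <= f n) by auto. assert (0 <= sumR n f) by auto. lra. Qed.
Lemma sumR_plus n f g : sumR n (fun i => f i + g i) = sumR n f + sumR n g.
Proof. induction n; simpl; [ring|]. rewrite IHn. ring. Qed.
Lemma sumR_const n c : sumR n (fun _ => c) = INR n * c.
Proof. induction n; simpl sumR; [simpl; ring|]. rewrite IHn, S_INR. ring. Qed.
Lemma sumR_trunc n k f : (k <= n)%nat ->
  sumR n (fun j => if lt_dec j k then f j else 0) = sumR k f.
Proof.
  induction n; intros Hk.
  - assert (k = 0%nat) by lia. subst. reflexivity.
  - destruct (Nat.eq_dec k (S n)) as [->|Hne].
    + apply sumR_ext. intros i Hi. destruct (lt_dec i (S n)); [auto|lia].
    + simpl. rewrite IHn by lia. destruct (lt_dec n k); [lia|ring].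
Qed.
Lemma sumR_mono n p : in_Pi n p -> forall i j, (i <= j <= n)%nat -> sumR i p <= sumR j p.
Proof.
  intros [Hp _] i j [Hij Hjn]. induction j.
  - assert (i = 0%nat) by lia. subst. lra.
  - destruct (Nat.eq_dec i (S j)) as [->|]; [lra|].
    simpl. assert (0 <= p j) by (apply Hp; lia). assert (sumR i p <= sumR j p) by (apply IHj; lia). lra.
Qed.

Lemma is_lub_unique E a b : is_lub E a -> is_lub E b -> a = b.
Proof. intros [Ha1 Ha2] [Hb1 Hb2]. apply Rle_antisym; auto. Qed.

Lemma quantile_lub F t : is_cdf F -> 0 < t < 1 -> is_lub (fun x => F x <= t) (quantile F t).
Proof.
  intros [Hmon [Hrc [Hm Hp]]] Ht. unfold quantile. apply epsilon_spec.
  destruct (Hp (1 - t) ltac:(lra)) as [M HM].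
  destruct (Hm t ltac:(lra)) as [M' HM'].
  destruct (completeness (fun x => F x <= t)) as [l Hl].
  - exists M. intros x Hx. destruct (Rle_dec x M); auto.
    assert (H := HM x ltac:(lra)). rewrite Rabs_left1 in H; [lra|].
    apply Rnot_le_lt in n. assert (H' := HM x ltac:(lra)). apply Rabs_def2 in H'. lra.
  - exists M'. assert (H := HM' M' (Rle_refl _)). apply Rabs_def2 in H. lra.
  - exists l; auto.
Qed.

Lemma quantile_mono F : is_cdf F -> qmono (quantile F).
Proof.
  intros HF s t Hs Hst Ht.
  destruct (quantile_lub F s HF ltac:(lra)) as [_ H2].
  destruct (quantile_lub F t HF ltac:(lra)) as [H1 _].
  apply H2. intros x Hx. apply H1. lra.
Qed.

Lemma quantile_supp F t : is_cdf F -> 0 < t < 1 -> supp F (quantile F t).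
Proof.
  intros HF Ht eps He. destruct (quantile_lub F t HF Ht) as [H1 H2].
  set (q := quantile F t) in *. destruct HF as [Hm _].
  assert (A : F (q - eps) <= t).
  { destruct (classic (exists x, F x <= t /\ q - eps < x)) as [[x [Hx1 Hx2]]|Hn].
    - apply Rle_trans with (F x); auto. apply Hm; lra.
    - exfalso. assert (q <= q - eps); [|lra]. apply H2. intros x Hx.
      destruct (Rle_dec x (q - eps)); auto. exfalso; apply Hn. exists x. split; auto; lra. }
  assert (B : t < F (q + eps)).
  { destruct (Rlt_dec t (F (q + eps))); auto. assert (q + eps <= q) by (apply H1; lra). lra. }
  lra.
Qed.

Lemma disc_quantile n p y k t : in_Pi n p -> in_Xi n y -> (k < n)%nat ->
  sumR k p <= t < sumR (S k) p -> quantile (discrete_cdf n p y) t = y k.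
Proof.
  intros Hp Hy Hk Ht.
  assert (L : is_lub (fun x => discrete_cdf n p y x <= t) (y k)).
  { split.
    - intros x Hx. destruct (Rle_dec x (y k)); auto.
      exfalso. assert (sumR (S k) p <= discrete_cdf n p y x); [|lra].
      unfold discrete_cdf. rewrite <- (sumR_trunc n (S k) p) by lia.
      apply sumR_le. intros i Hi. destruct (lt_dec i (S k)).
      + destruct (Rle_dec (y i) x) as [|Hn]; [lra|]. exfalso. apply Rnot_le_lt in Hn. apply Rnot_le_lt in n0. assert (y i <= y k) by (apply Hy; lia). lra.
      + destruct (Rle_dec (y i) x); [apply (proj1 Hp); auto|lra].
    - intros b Hb. apply Rnot_lt_le. intro Hlt.
      set (x := (b + y k) / 2).
      assert (x <= b); [|unfold x in *; lra].
      apply Hb. apply Rle_trans with (sumR k p); [|lra].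
      unfold discrete_cdf. rewrite <- (sumR_trunc n k p) by lia.
      apply sumR_le. intros i Hi. destruct (lt_dec i k).
      + destruct (Rle_dec (y i) x); [lra|apply (proj1 Hp); auto].
      + destruct (Rle_dec (y i) x); [|lra]. exfalso. assert (y k <= y i) by (apply Hy; lia). unfold x in *; lra. }
  apply (is_lub_unique _ _ _ (epsilon_spec (inhabits 0) _ (ex_intro _ _ L)) L).
Qed.

Definition alpha (p : nat -> R) (a b : R) (k : nat) := Rmax a (Rmin (sumR k p) b).

Lemma alpha_range p a b k : a <= b -> a <= alpha p a b k <= b.
Proof. intros. unfold alpha, Rmax, Rmin. destruct (Rle_dec (sumR k p) b); destruct (Rle_dec a _); lra. Qed.

Lemma alpha_mono n p a b k : in_Pi n p -> (k < n)%nat -> alpha p a b k <= alpha p a b (S k).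
Proof.
  intros Hp Hk. assert (sumR k p <= sumR (S k) p) by (apply (sumR_mono n); auto; lia).
  unfold alpha, Rmax, Rmin. destruct (Rle_dec (sumR k p) b); destruct (Rle_dec (sumR (S k) p) b);
  repeat (destruct (Rle_dec a _)); lra.
Qed.

Lemma alpha_inside p a b k x : a <= b -> alpha p a b k < x < alpha p a b (S k) ->
  sumR k p < x < sumR (S k) p /\ a < x < b.
Proof.
  intros Hab. unfold alpha, Rmax, Rmin. destruct (Rle_dec (sumR k p) b); destruct (Rle_dec (sumR (S k) p) b);
  repeat (destruct (Rle_dec a _)); lra.
Qed.

Lemma alpha_cell p a b k : a <= b -> alpha p a b k < alpha p a b (S k) ->
  sumR k p <= alpha p a b k /\ alpha p a b (S k) <= sumR (S k) p.
Proof.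
  intros Hab. unfold alpha, Rmax, Rmin. destruct (Rle_dec (sumR k p) b); destruct (Rle_dec (sumR (S k) p) b);
  repeat (destruct (Rle_dec a _)); lra.
Qed.

Lemma alpha_0 p a b : 0 < a -> alpha p a b 0 = a.
Proof. intros. unfold alpha. simpl. unfold Rmax, Rmin. destruct (Rle_dec 0 b); destruct (Rle_dec a _); lra. Qed.

Lemma alpha_n n p a b : in_Pi n p -> a <= b -> b < 1 -> alpha p a b n = b.
Proof. intros [_ H] ? ?. unfold alpha. rewrite H. unfold Rmax, Rmin. destruct (Rle_dec 1 b); destruct (Rle_dec a _); lra. Qed.

Lemma alpha_wide p A B u v k : A <= u -> v <= B -> sumR k p <= u -> u <= v -> v <= sumR (S k) p ->
  alpha p A B k <= u /\ v <= alpha p A B (S k).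
Proof.
  intros. unfold alpha, Rmax, Rmin. destruct (Rle_dec (sumR k p) B); destruct (Rle_dec (sumR (S k) p) B);
  repeat (destruct (Rle_dec A _)); lra.
Qed.

Definition gfun (r : R) (F D : R -> R) := fun t => powr (Rabs (quantile D t - quantile F t)) r.

Lemma decomp r F n p y a b : 0 <= r -> is_cdf F -> in_Pi n p -> in_Xi n y -> 0 < a -> a <= b -> b < 1 ->
  forall k, (k <= n)%nat ->
  ex_RInt (gfun r F (discrete_cdf n p y)) a (alpha p a b k) /\
  RInt (gfun r F (discrete_cdf n p y)) a (alpha p a b k) =
  sumR k (fun i => RInt (G r (quantile F) (y i)) (alpha p a b i) (alpha p a b (S i))).
Proof.
  intros Hr HF Hp Hy Ha Hab Hb. induction k; intros Hk.
  - rewrite alpha_0 by auto. split; [apply ex_RInt_point|]. rewrite RInt_point. reflexivity.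
  - destruct IHk as [E1 E2]; [lia|].
    assert (Hm := alpha_mono n p a b k Hp ltac:(lia)).
    assert (R1 := alpha_range p a b k Hab). assert (R2 := alpha_range p a b (S k) Hab).
    assert (Eq : forall x, Rmin (alpha p a b k) (alpha p a b (S k)) < x < Rmax (alpha p a b k) (alpha p a b (S k)) ->
                  G r (quantile F) (y k) x = gfun r F (discrete_cdf n p y) x).
    { intros x Hx. rewrite Rmin_left, Rmax_right in Hx by auto.
      destruct (alpha_inside p a b k x Hab Hx) as [H1 H2].
      unfold G, gfun. rewrite (disc_quantile n p y k x); auto; try lia; try lra. }
    assert (E3 : ex_RInt (gfun r F (discrete_cdf n p y)) (alpha p a b k) (alpha p a b (S k))).
    { apply (ex_RInt_ext _ _ _ _ Eq). apply ex_G; auto; [apply quantile_mono; auto|lra|lra]. }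
    split.
    + apply (ex_RInt_Chasles _ _ _ _ E1 E3).
    + rewrite <- (RInt_Chasles _ _ _ _ E1 E3). simpl sumR. rewrite <- E2.
      rewrite <- (RInt_ext _ _ _ _ Eq). reflexivity.
Qed.

Lemma decomp_full r F n p y a b : 0 <= r -> is_cdf F -> in_Pi n p -> in_Xi n y -> 0 < a -> a <= b -> b < 1 ->
  ex_RInt (gfun r F (discrete_cdf n p y)) a b /\
  RInt (gfun r F (discrete_cdf n p y)) a b =
  sumR n (fun i => RInt (G r (quantile F) (y i)) (alpha p a b i) (alpha p a b (S i))).
Proof.
  intros. rewrite <- (alpha_n n p a b) at 1 by auto. rewrite <- (alpha_n n p a b) at 2 by auto.
  apply decomp; auto.
Qed.

Definition Opt (r : R) (F : R -> R) (p : nat -> R) (i : nat) (xi : R) : Prop :=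
  forall z al be eps, sumR i p <= al -> al <= be -> be <= sumR (S i) p -> 0 < al -> be < 1 -> 0 < eps ->
  exists u v, sumR i p <= u /\ u <= v /\ v <= sumR (S i) p /\ 0 < u /\ v < 1 /\
    RInt (G r (quantile F) xi) al be <= RInt (G r (quantile F) z) u v + eps.

Lemma assembly_k r F n p x y a b eps : 0 <= r -> is_cdf F -> in_Pi n p ->
  (forall i, (i < n)%nat -> 0 < p i -> Opt r F p i (x i)) ->
  0 < a -> a <= b -> b < 1 -> 0 < eps ->
  forall k, (k <= n)%nat -> exists A B, 0 < A /\ A <= B /\ B < 1 /\
   forall A' B', 0 < A' -> A' <= A -> B <= B' -> B' < 1 ->
   sumR k (fun i => RInt (G r (quantile F) (x i)) (alpha p a b i) (alpha p a b (S i))) <=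
   sumR k (fun i => RInt (G r (quantile F) (y i)) (alpha p A' B' i) (alpha p A' B' (S i))) + INR k * eps.
Proof.
  intros Hr HF Hp HO Ha Hab Hb He. assert (Hq := quantile_mono F HF).
  induction k; intros Hk.
  - exists (1/2), (1/2). repeat split; try lra. intros. simpl. lra.
  - destruct IHk as [A0 [B0 [HA0 [HAB0 [HB0 IH]]]]]; [lia|].
    assert (Hm := alpha_mono n p a b k Hp ltac:(lia)).
    assert (R1 := alpha_range p a b k Hab). assert (R2 := alpha_range p a b (S k) Hab).
    destruct (Rle_lt_or_eq_dec _ _ Hm) as [Hlt|Heq].
    + destruct (alpha_cell p a b k Hab Hlt) as [C1 C2].
      assert (Hpk : 0 < p k) by (simpl in C2; lra).
      destruct (HO k ltac:(lia) Hpk (y k) (alpha p a b k) (alpha p a b (S k)) eps C1 Hm C2 ltac:(lra) ltac:(lra) He)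
        as [u [v [U1 [U2 [U3 [U4 [U5 U6]]]]]]].
      exists (Rmin A0 u), (Rmax B0 v).
      assert (Rmin A0 u <= A0) by apply Rmin_l. assert (Rmin A0 u <= u) by apply Rmin_r.
      assert (B0 <= Rmax B0 v) by apply Rmax_l. assert (v <= Rmax B0 v) by apply Rmax_r.
      repeat split.
      * unfold Rmin; destruct (Rle_dec A0 u); lra.
      * lra.
      * unfold Rmax; destruct (Rle_dec B0 v); lra.
      * intros A' B' HA' HA'1 HB'1 HB'2.
        assert (IH' := IH A' B' HA' ltac:(lra) ltac:(lra) HB'2).
        destruct (alpha_wide p A' B' u v k ltac:(lra) ltac:(lra) U1 U2 U3) as [W1 W2].
        assert (S1 := alpha_range p A' B' k ltac:(lra)). assert (S2 := alpha_range p A' B' (S k) ltac:(lra)).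
        assert (RInt (G r (quantile F) (y k)) u v <=
                RInt (G r (quantile F) (y k)) (alpha p A' B' k) (alpha p A' B' (S k))).
        { apply RInt_G_sub; auto; lra. }
        simpl sumR. rewrite S_INR. lra.
    + exists A0, B0. repeat split; auto.
      intros A' B' HA' HA'1 HB'1 HB'2.
      assert (IH' := IH A' B' HA' HA'1 HB'1 HB'2).
      assert (Hm' := alpha_mono n p A' B' k Hp ltac:(lia)).
      assert (S1 := alpha_range p A' B' k ltac:(lra)). assert (S2 := alpha_range p A' B' (S k) ltac:(lra)).
      assert (0 <= RInt (G r (quantile F) (y k)) (alpha p A' B' k) (alpha p A' B' (S k))).
      { apply RInt_ge_0; auto. apply ex_G; auto; lra. intros; apply G_nonneg. }
      simpl sumR. rewrite Heq, RInt_point. rewrite S_INR. change (zero : R) with 0. lra.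
Qed.

Lemma assembly r F n p x y a b eps : 0 <= r -> is_cdf F -> in_Pi n p -> in_Xi n x -> in_Xi n y ->
  (forall i, (i < n)%nat -> 0 < p i -> Opt r F p i (x i)) ->
  0 < a -> a <= b -> b < 1 -> 0 < eps ->
  exists A B, 0 < A /\ A <= B /\ B < 1 /\ ex_RInt (gfun r F (discrete_cdf n p y)) A B /\
   RInt (gfun r F (discrete_cdf n p x)) a b <= RInt (gfun r F (discrete_cdf n p y)) A B + INR n * eps.
Proof.
  intros Hr HF Hp Hx Hy HO Ha Hab Hb He.
  destruct (assembly_k r F n p x y a b eps Hr HF Hp HO Ha Hab Hb He n (le_n n)) as [A [B [HA [HAB [HB H]]]]].
  exists A, B. destruct (decomp_full r F n p y A B Hr HF Hp Hy HA HAB HB) as [E1 E2].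
  destruct (decomp_full r F n p x a b Hr HF Hp Hx Ha Hab Hb) as [E3 E4].
  repeat split; auto. rewrite E2, E4. apply H; lra.
Qed.

Lemma G_bound r F M z u v : 1 <= r -> is_cdf F ->
  int01 (fun t => powr (Rabs (quantile F t)) r) M -> 0 < u -> u <= v -> v < 1 ->
  RInt (G r (quantile F) z) u v <= Rpower 2 r * (Phi r z + M).
Proof.
  intros Hr HF HM Hu Huv Hv. assert (Hq := quantile_mono F HF).
  assert (E0 : ex_RInt (fun t => powr (Rabs (quantile F t)) r) u v).
  { apply (ex_RInt_ext (G r (quantile F) 0)). intros; unfold G. rewrite Rminus_0_l, Rabs_Ropp. reflexivity.
    apply ex_G; auto; lra. }
  assert (I0 : RInt (fun t => powr (Rabs (quantile F t)) r) u v <= M).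
  { apply (proj1 HM). exists u, v, (ex_RInt_Reals_0 _ _ _ E0). repeat split; auto.
    apply RInt_Reals. }
  assert (P0 : 0 <= RInt (fun t => powr (Rabs (quantile F t)) r) u v).
  { apply RInt_ge_0; auto. intros; apply powr_nonneg. }
  assert (H2 : 0 < Rpower 2 r) by (unfold Rpower; apply exp_pos).
  assert (E1 : ex_RInt (fun t => Rpower 2 r * (Phi r z + powr (Rabs (quantile F t)) r)) u v).
  { apply ex_scalR. apply ex_plusR; auto. apply ex_RInt_const. }
  apply Rle_trans with (RInt (fun t => Rpower 2 r * (Phi r z + powr (Rabs (quantile F t)) r)) u v).
  - apply RInt_le; auto. apply ex_G; auto; lra. intros t _. unfold G.
    apply (Phi_bound r z (quantile F t) Hr).
  - rewrite RInt_scalR by (apply ex_plusR; auto; apply ex_RInt_const).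
    rewrite RInt_plusR by (auto; apply ex_RInt_const). rewrite RInt_constR.
    apply Rmult_le_compat_l; [lra|]. assert (0 <= Phi r z) by apply Phi_nonneg.
    assert (Phi r z * (v - u) <= Phi r z) by nra. lra.
Qed.

Lemma minimizer_of_Opt r F n p x : 1 <= r -> is_cdf F -> finite_moment r F -> in_Pi n p -> in_Xi n x ->
  (forall i, (i < n)%nat -> 0 < p i -> Opt r F p i (x i)) -> is_minimizer r F n p x.
Proof.
  intros Hr HF [M HM] Hp Hx HO.
  set (SS := fun v => exists a b (pr : Riemann_integrable (gfun r F (discrete_cdf n p x)) a b),
                      0 < a /\ a <= b /\ b < 1 /\ v = RiemannInt pr).
  destruct (completeness SS) as [c Hc].
  - exists (sumR n (fun i => Rpower 2 r * (Phi r (x i) + M))).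
    intros v [a [b [pr [Ha [Hab [Hb ->]]]]]].
    rewrite <- RInt_Reals.
    destruct (decomp_full r F n p x a b ltac:(lra) HF Hp Hx Ha Hab Hb) as [_ E]. rewrite E.
    apply sumR_le. intros i Hi.
    assert (Hm := alpha_mono n p a b i Hp Hi).
    assert (R1 := alpha_range p a b i Hab). assert (R2 := alpha_range p a b (S i) Hab).
    apply G_bound; auto; lra.
  - exists (RiemannInt (RiemannInt_P7 (gfun r F (discrete_cdf n p x)) (1/2))).
    exists (1/2), (1/2), (RiemannInt_P7 _ _). repeat split; lra.
  - exists c. split; [exact Hc|].
    intros y c' Hy Hc'. apply (proj2 Hc).
    intros v [a [b [pr [Ha [Hab [Hb ->]]]]]].
    rewrite <- RInt_Reals. apply Rle_plus_epsilon. intros eps He.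
    assert (Hn : 0 < INR n + 1) by (assert (0 <= INR n) by apply pos_INR; lra).
    destruct (assembly r F n p x y a b (eps / (INR n + 1)) ltac:(lra) HF Hp Hx Hy HO Ha Hab Hb
                ltac:(apply Rdiv_lt_0_compat; lra)) as [A [B [HA [HAB [HB [E H]]]]]].
    assert (RInt (gfun r F (discrete_cdf n p y)) A B <= c').
    { apply (proj1 Hc'). exists A, B, (ex_RInt_Reals_0 _ _ _ E). repeat split; auto. apply RInt_Reals. }
    assert (INR n * (eps / (INR n + 1)) <= eps).
    { apply (Rmult_le_reg_r (INR n + 1)); auto. field_simplify; [|lra]. nra. }
    lra.
Qed.

Definition sig_m (m t : R) := if Rlt_dec t m then 1 else -1.

Lemma sig_int m u v : u <= m <= v -> ex_RInt (sig_m m) u v /\ RInt (sig_m m) u v = (m - u) - (v - m).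
Proof.
  intros [H1 H2].
  assert (E1 : forall x, Rmin u m < x < Rmax u m -> (fun _ => 1) x = sig_m m x).
  { intros x Hx. rewrite Rmin_left, Rmax_right in Hx by lra. unfold sig_m. destruct (Rlt_dec x m); lra. }
  assert (E2 : forall x, Rmin m v < x < Rmax m v -> (fun _ => -1) x = sig_m m x).
  { intros x Hx. rewrite Rmin_left, Rmax_right in Hx by lra. unfold sig_m. destruct (Rlt_dec x m); lra. }
  assert (X1 : ex_RInt (sig_m m) u m) by (apply (ex_RInt_ext _ _ _ _ E1); apply ex_RInt_const).
  assert (X2 : ex_RInt (sig_m m) m v) by (apply (ex_RInt_ext _ _ _ _ E2); apply ex_RInt_const).
  split. apply (ex_RInt_Chasles _ _ _ _ X1 X2).
  rewrite <- (RInt_Chasles _ _ _ _ X1 X2). rewrite <- (RInt_ext _ _ _ _ E1), <- (RInt_ext _ _ _ _ E2).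
  rewrite !RInt_constR. change (1 * (m - u) + -1 * (v - m) = m - u - (v - m)). ring.
Qed.

Lemma G1 q w t : G 1 q w t = Rabs (w - q t).
Proof. unfold G. apply powr_1, Rabs_pos. Qed.

Lemma opt_r1 F p i : is_cdf F -> 0 <= sumR i p -> sumR (S i) p <= 1 -> sumR i p < sumR (S i) p ->
  Opt 1 F p i (quantile F ((sumR i p + sumR (S i) p) / 2)).
Proof.
  intros HF H0 H1 Hlt z al be eps Hal Hab Hbe Hal0 Hbe1 He. assert (Hq := quantile_mono F HF).
  set (Pi := sumR i p) in *. set (Pj := sumR (S i) p) in *.
  set (m := (Pi + Pj) / 2). set (q := quantile F) in *. set (x := q m).
  set (del := eps / (Rabs (z - x) + 1)).
  assert (Hd : 0 < del) by (unfold del; apply Rdiv_lt_0_compat; [lra| assert (0 <= Rabs (z - x)) by apply Rabs_pos; lra]).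
  assert (Hm1 : Pi < m < Pj) by (unfold m; lra).
  set (u := if Rlt_dec 0 Pi then Pi else Rmin (Rmin al m) (del / 2)).
  set (v := if Rlt_dec Pj 1 then Pj else Rmax (Rmax be m) (1 - del / 2)).
  assert (U : Pi <= u /\ u <= al /\ u <= m /\ 0 < u /\ -(del/2) <= Pi - u).
  { unfold u. destruct (Rlt_dec 0 Pi); [lra|].
    assert (Rmin (Rmin al m) (del / 2) <= Rmin al m) by apply Rmin_l.
    assert (Rmin al m <= al) by apply Rmin_l. assert (Rmin al m <= m) by apply Rmin_r.
    assert (Rmin (Rmin al m) (del / 2) <= del/2) by apply Rmin_r.
    assert (0 < Rmin (Rmin al m) (del / 2)).
    { unfold Rmin. destruct (Rle_dec al m); destruct (Rle_dec _ (del/2)); lra. }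
    lra. }
  assert (V : v <= Pj /\ be <= v /\ m <= v /\ v < 1 /\ Pj - v <= del/2).
  { unfold v. destruct (Rlt_dec Pj 1); [lra|].
    assert (Rmax be m <= Rmax (Rmax be m) (1 - del / 2)) by apply Rmax_l.
    assert (be <= Rmax be m) by apply Rmax_l. assert (m <= Rmax be m) by apply Rmax_r.
    assert (1 - del/2 <= Rmax (Rmax be m) (1 - del / 2)) by apply Rmax_r.
    assert (Rmax (Rmax be m) (1 - del / 2) < 1).
    { unfold Rmax. destruct (Rle_dec be m); destruct (Rle_dec _ (1 - del/2)); lra. }
    lra. }
  destruct U as [U1 [U2 [U3 [U4 U5]]]]. destruct V as [V1 [V2 [V3 [V4 V5]]]].
  exists u, v. repeat split; try lra.
  destruct (sig_int m u v ltac:(lra)) as [SX SE].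
  assert (EX : ex_RInt (G 1 q x) u v) by (apply ex_G; auto; lra).
  assert (EZ : ex_RInt (G 1 q z) u v) by (apply ex_G; auto; lra).
  assert (L1 : RInt (G 1 q x) al be <= RInt (G 1 q x) u v) by (apply RInt_G_sub; auto; lra).
  assert (L2 : RInt (fun t => G 1 q x t + (z - x) * sig_m m t) u v <= RInt (G 1 q z) u v).
  { apply RInt_le; auto; try lra. apply ex_plusR; auto. apply ex_scalR; auto.
    intros t Ht. rewrite !G1. unfold sig_m. destruct (Rlt_dec t m).
    - assert (q t <= x) by (unfold x; apply Hq; lra).
      rewrite (Rabs_right (x - q t)) by lra. assert (z - q t <= Rabs (z - q t)) by apply Rle_abs. lra.
    - assert (x <= q t) by (unfold x; apply Hq; lra).
      rewrite (Rabs_left1 (x - q t)) by lra. assert (-(z - q t) <= Rabs (z - q t)) by (rewrite <- Rabs_Ropp; apply Rle_abs). lra. }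
  rewrite RInt_plusR in L2 by (auto; apply ex_scalR; auto).
  rewrite RInt_scalR in L2 by auto. rewrite SE in L2.
  assert (B : Rabs ((z - x) * (m - u - (v - m))) <= eps).
  { rewrite Rabs_mult. assert (Rabs (m - u - (v - m)) <= del).
    { replace (m - u - (v - m)) with ((Pi - u) + (Pj - v)) by (unfold m; field). apply Rabs_le; lra. }
    apply Rle_trans with (Rabs (z - x) * del). apply Rmult_le_compat_l; auto; apply Rabs_pos.
    unfold del. apply (Rmult_le_reg_r (Rabs (z - x) + 1)). assert (0 <= Rabs (z - x)) by apply Rabs_pos. lra.
    field_simplify. assert (0 <= Rabs (z - x)) by apply Rabs_pos. nra.
    assert (0 <= Rabs (z - x)) by apply Rabs_pos. lra. }
  assert (B' := Rle_abs (-((z - x) * (m - u - (v - m))))). rewrite Rabs_Ropp in B'.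
  lra.
Qed.

Definition convexf (f : R -> R) := forall a b l, 0 <= l <= 1 -> f (l * a + (1 - l) * b) <= l * f a + (1 - l) * f b.

Lemma convex_lip f z w : convexf f -> Rabs (w - z) <= 1 ->
  Rabs (f w - f z) <= (Rabs (f (z+1) - f z) + Rabs (f z - f (z-1))) * Rabs (w - z).
Proof.
  intros Hc Hw. set (K := Rabs (f (z+1) - f z) + Rabs (f z - f (z-1))).
  assert (A1 := Rle_abs (f (z+1) - f z)). assert (A2 := Rle_abs (-(f (z+1) - f z))). rewrite Rabs_Ropp in A2.
  assert (A3 := Rle_abs (f z - f (z-1))). assert (A4 := Rle_abs (-(f z - f (z-1)))). rewrite Rabs_Ropp in A4.
  destruct (Rle_dec z w).
  - rewrite (Rabs_right (w - z)) in Hw |- * by lra. set (h := w - z) in *.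
    assert (U : f w <= h * f (z+1) + (1 - h) * f z).
    { replace w with (h * (z+1) + (1 - h) * z) at 1 by (unfold h; ring). apply Hc. unfold h in *; lra. }
    assert (L : f z <= (1/(1+h)) * f w + (1 - 1/(1+h)) * f (z-1)).
    { replace z with ((1/(1+h)) * w + (1 - 1/(1+h)) * (z-1)) at 1 by (unfold h; field; unfold h in *; lra).
      apply Hc. split. apply Rdiv_le_0_compat; unfold h in *; lra.
      apply (Rmult_le_reg_r (1+h)). unfold h in *; lra. field_simplify; unfold h in *; lra. }
    assert (L' : (1 + h) * f z <= f w + h * f (z - 1)).
    { apply (Rmult_le_compat_l (1+h)) in L; [|unfold h in *; lra].
      replace ((1 + h) * (1 / (1 + h) * f w + (1 - 1 / (1 + h)) * f (z - 1))) with (f w + h * f (z-1)) in L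
        by (field; unfold h in *; lra). lra. }
    apply Rabs_le. assert (0 <= h) by (unfold h in *; lra).
    assert (B1 : h * (f (z+1) - f z) <= h * Rabs (f (z+1) - f z)) by (apply Rmult_le_compat_l; lra).
    assert (B2 : h * (-(f z - f (z-1))) <= h * Rabs (f z - f (z-1))) by (apply Rmult_le_compat_l; lra).
    assert (B3 : 0 <= h * Rabs (f (z+1) - f z)) by (apply Rmult_le_pos; [lra|apply Rabs_pos]).
    assert (B4 : 0 <= h * Rabs (f z - f (z-1))) by (apply Rmult_le_pos; [lra|apply Rabs_pos]).
    unfold K. split; nra.
  - rewrite (Rabs_left1 (w - z)) in Hw |- * by lra. replace (- (w - z)) with (z - w) in * by ring. set (h := z - w) in *.
    assert (U : f w <= h * f (z-1) + (1 - h) * f z).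
    { replace w with (h * (z-1) + (1 - h) * z) at 1 by (unfold h; ring). apply Hc. unfold h in *; lra. }
    assert (L : f z <= (1/(1+h)) * f w + (1 - 1/(1+h)) * f (z+1)).
    { replace z with ((1/(1+h)) * w + (1 - 1/(1+h)) * (z+1)) at 1 by (unfold h; field; unfold h in *; lra).
      apply Hc. split. apply Rdiv_le_0_compat; unfold h in *; lra.
      apply (Rmult_le_reg_r (1+h)). unfold h in *; lra. field_simplify; unfold h in *; lra. }
    assert (L' : (1 + h) * f z <= f w + h * f (z + 1)).
    { apply (Rmult_le_compat_l (1+h)) in L; [|unfold h in *; lra].
      replace ((1 + h) * (1 / (1 + h) * f w + (1 - 1 / (1 + h)) * f (z + 1))) with (f w + h * f (z+1)) in L
        by (field; unfold h in *; lra). lra. }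
    apply Rabs_le. assert (0 <= h) by (unfold h in *; lra).
    assert (B1 : h * (f (z-1) - f z) <= h * Rabs (f z - f (z-1))) by (apply Rmult_le_compat_l; lra).
    assert (B2 : h * (-(f z - f (z+1))) <= h * Rabs (f (z+1) - f z)) by (apply Rmult_le_compat_l; lra).
    assert (B3 : 0 <= h * Rabs (f (z+1) - f z)) by (apply Rmult_le_pos; [lra|apply Rabs_pos]).
    assert (B4 : 0 <= h * Rabs (f z - f (z-1))) by (apply Rmult_le_pos; [lra|apply Rabs_pos]).
    unfold K. split; nra.
Qed.

Lemma convex_cont f : convexf f -> forall z, continuity_pt f z.
Proof.
  intros Hc z. set (K := Rabs (f (z+1) - f z) + Rabs (f z - f (z-1)) + 1).
  assert (HK : 0 < K) by (unfold K; assert (0 <= Rabs (f (z+1) - f z)) by apply Rabs_pos;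
                           assert (0 <= Rabs (f z - f (z-1))) by apply Rabs_pos; lra).
  unfold continuity_pt, continue_in, limit1_in, limit_in. intros eps He.
  exists (Rmin 1 (eps / K)). split.
  - apply Rmin_pos; [lra|]. apply Rdiv_lt_0_compat; lra.
  - intros x [_ Hx]. simpl in *. unfold R_dist in *.
    assert (Hx1 : Rabs (x - z) <= 1) by (assert (Rmin 1 (eps/K) <= 1) by apply Rmin_l; lra).
    assert (Hx2 : Rabs (x - z) < eps / K) by (assert (Rmin 1 (eps/K) <= eps/K) by apply Rmin_r; lra).
    eapply Rle_lt_trans; [apply convex_lip; auto|].
    apply Rle_lt_trans with (K * Rabs (x - z)).
    + apply Rmult_le_compat_r; [apply Rabs_pos|unfold K; lra].
    + apply (Rmult_lt_compat_l K) in Hx2; auto. replace (K * (eps / K)) with eps in Hx2 by (field; lra). lra.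
Qed.

Definition cellI (p : nat -> R) (i : nat) (u v : R) :=
  sumR i p <= u /\ u <= v /\ v <= sumR (S i) p /\ 0 < u /\ v < 1.
Definition cellok (p : nat -> R) (i : nat) :=
  0 <= sumR i p /\ sumR (S i) p <= 1 /\ sumR i p < sumR (S i) p.

Definition SJ r F p i z := fun s => exists u v, cellI p i u v /\ s = RInt (G r (quantile F) z) u v.
Definition J r F p i z := epsilon (inhabits 0) (is_lub (SJ r F p i z)).

Lemma J_lub r F p i z : 1 <= r -> is_cdf F -> finite_moment r F -> cellok p i ->
  is_lub (SJ r F p i z) (J r F p i z).
Proof.
  intros Hr HF [M HM] [C1 [C2 C3]]. unfold J. apply epsilon_spec.
  destruct (completeness (SJ r F p i z)) as [l Hl].
  - exists (Rpower 2 r * (Phi r z + M)). intros s [u [v [[U1 [U2 [U3 [U4 U5]]]] ->]]].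
    apply (G_bound r F M); auto.
  - set (m := (sumR i p + sumR (S i) p) / 2). exists (RInt (G r (quantile F) z) m m).
    exists m, m. split; auto. unfold cellI, m. repeat split; lra.
  - exists l; auto.
Qed.

Lemma J_elem r F p i z u v : 1 <= r -> is_cdf F -> finite_moment r F -> cellok p i ->
  cellI p i u v -> RInt (G r (quantile F) z) u v <= J r F p i z.
Proof. intros. apply (proj1 (J_lub r F p i z H H0 H1 H2)). exists u, v. auto. Qed.

Lemma J_approx r F p i z eps : 1 <= r -> is_cdf F -> finite_moment r F -> cellok p i -> 0 < eps ->
  exists u v, cellI p i u v /\ J r F p i z - eps < RInt (G r (quantile F) z) u v.
Proof.
  intros. destruct (J_lub r F p i z H H0 H1 H2) as [L1 L2].
  apply NNPP. intro Hn. assert (J r F p i z <= J r F p i z - eps); [|lra].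
  apply L2. intros s [u [v [Hc ->]]]. apply Rnot_lt_le. intro. apply Hn. exists u, v. auto.
Qed.

Lemma J_le r F p i x z : 1 <= r -> is_cdf F -> finite_moment r F -> cellok p i ->
  (forall t, sumR i p <= t <= sumR (S i) p -> 0 < t < 1 -> G r (quantile F) x t <= G r (quantile F) z t) ->
  J r F p i x <= J r F p i z.
Proof.
  intros Hr HF HM Hc H. assert (Hq := quantile_mono F HF). apply (proj2 (J_lub r F p i x Hr HF HM Hc)).
  intros s [u [v [[U1 [U2 [U3 [U4 U5]]]] ->]]].
  apply Rle_trans with (RInt (G r (quantile F) z) u v).
  - apply RInt_le; auto; try (apply ex_G; auto; lra). intros t Ht. apply H; lra.
  - apply J_elem; auto. repeat split; auto.
Qed.

Lemma J_convex r F p i : 1 <= r -> is_cdf F -> finite_moment r F -> cellok p i -> convexf (J r F p i).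
Proof.
  intros Hr HF HM Hc a b l Hl. assert (Hq := quantile_mono F HF).
  apply (proj2 (J_lub r F p i _ Hr HF HM Hc)).
  intros s [u [v [Hu ->]]]. destruct Hu as [U1 [U2 [U3 [U4 U5]]]].
  assert (Ea : ex_RInt (G r (quantile F) a) u v) by (apply ex_G; auto; lra).
  assert (Eb : ex_RInt (G r (quantile F) b) u v) by (apply ex_G; auto; lra).
  apply Rle_trans with (RInt (fun t => l * G r (quantile F) a t + (1 - l) * G r (quantile F) b t) u v).
  - apply RInt_le; auto. apply ex_G; auto; lra. apply ex_plusR; apply ex_scalR; auto.
    intros t _. unfold G. fold (Phi r (l * a + (1 - l) * b - quantile F t)).
    fold (Phi r (a - quantile F t)). fold (Phi r (b - quantile F t)).
    replace (l * a + (1 - l) * b - quantile F t) with (l * (a - quantile F t) + (1 - l) * (b - quantile F t)) by ring.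
    apply Phi_convex; auto.
  - rewrite RInt_plusR by (apply ex_scalR; auto). rewrite !RInt_scalR by auto.
    assert (RInt (G r (quantile F) a) u v <= J r F p i a) by (apply J_elem; auto; repeat split; auto).
    assert (RInt (G r (quantile F) b) u v <= J r F p i b) by (apply J_elem; auto; repeat split; auto).
    apply Rplus_le_compat; apply Rmult_le_compat_l; lra.
Qed.

Lemma J_min r F p i : 1 <= r -> is_cdf F -> finite_moment r F -> cellok p i ->
  exists zm, forall w, J r F p i zm <= J r F p i w.
Proof.
  intros Hr HF HM Hc. assert (Hq := quantile_mono F HF). destruct Hc as [C1 [C2 C3]].
  set (h := (sumR (S i) p - sumR i p) / 4). set (m := (sumR i p + sumR (S i) p) / 2).
  assert (Hh : 0 < h) by (unfold h; lra).
  set (u0 := m - h). set (v0 := m + h).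
  assert (Hcell : cellI p i u0 v0) by (unfold cellI, u0, v0, m, h; repeat split; lra).
  set (Qa := quantile F u0). set (Qb := quantile F v0).
  assert (HQ : Qa <= Qb) by (unfold Qa, Qb; apply Hq; unfold u0, v0, m, h in *; lra).
  set (K0 := J r F p i Qa).
  set (R0 := Rmax 1 ((K0 + 1) / (v0 - u0))).
  assert (HR1 : 1 <= R0) by apply Rmax_l.
  assert (HR2 : (K0 + 1) / (v0 - u0) <= R0) by apply Rmax_r.
  assert (Hvu : 0 < v0 - u0) by (unfold v0, u0; lra).
  assert (Far : forall w, (w <= Qa - R0 \/ Qb + R0 <= w) -> K0 < J r F p i w).
  { intros w Hw.
    apply Rlt_le_trans with (RInt (G r (quantile F) w) u0 v0).
    2: { apply J_elem; auto. repeat split; lra. }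
    apply Rlt_le_trans with (RInt (fun _ => R0) u0 v0).
    - rewrite RInt_constR. apply (Rmult_le_compat_r (v0 - u0)) in HR2; [|lra].
      replace ((K0 + 1) / (v0 - u0) * (v0 - u0)) with (K0 + 1) in HR2 by (field; lra). lra.
    - destruct Hcell as [U1 [U2 [U3 [U4 U5]]]].
      apply RInt_le; auto; try lra. apply ex_RInt_const. apply ex_G; auto; lra.
      intros t Ht. unfold G.
      assert (Qa <= quantile F t) by (unfold Qa; apply Hq; lra).
      assert (quantile F t <= Qb) by (unfold Qb; apply Hq; lra).
      apply Rle_trans with (powr R0 r). apply powr_ge_id; auto.
      apply powr_mono; [lra|]. destruct Hw.
      + rewrite Rabs_left1 by lra. lra.
      + rewrite Rabs_right by lra. lra. }
  assert (Hcont := convex_cont _ (J_convex r F p i Hr HF HM ltac:(repeat split; auto))).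
  destruct (continuity_ab_min (J r F p i) (Qa - R0) (Qb + R0) ltac:(lra) (fun c _ => Hcont c)) as [mx [Hmx1 Hmx2]].
  exists mx. intros w.
  destruct (Rle_dec (Qa - R0) w); destruct (Rle_dec w (Qb + R0)).
  - apply Hmx1; lra.
  - assert (J r F p i mx <= K0) by (apply Hmx1; lra). assert (K0 < J r F p i w) by (apply Far; lra). lra.
  - assert (J r F p i mx <= K0) by (apply Hmx1; lra). assert (K0 < J r F p i w) by (apply Far; lra). lra.
  - assert (J r F p i mx <= K0) by (apply Hmx1; lra). assert (K0 < J r F p i w) by (apply Far; lra). lra.
Qed.

Definition Good r F p i xi :=
  (forall s, 0 < s < 1 -> s <= sumR i p -> quantile F s <= xi) /\
  (forall s, 0 < s < 1 -> sumR (S i) p <= s -> xi <= quantile F s) /\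
  supp F xi /\ Opt r F p i xi.

Lemma hull F p i z : is_cdf F -> cellok p i ->
  exists x, (forall t, sumR i p <= t <= sumR (S i) p -> 0 < t < 1 -> Rabs (x - quantile F t) <= Rabs (z - quantile F t)) /\
    (forall eps, 0 < eps -> exists t, (sumR i p <= t <= sumR (S i) p /\ 0 < t < 1) /\ quantile F t < x + eps) /\
    (forall eps, 0 < eps -> exists t, (sumR i p <= t <= sumR (S i) p /\ 0 < t < 1) /\ x - eps < quantile F t).
Proof.
  intros HF [C1 [C2 C3]]. set (q := quantile F).
  set (T := fun t => sumR i p <= t <= sumR (S i) p /\ 0 < t < 1).
  set (m := (sumR i p + sumR (S i) p) / 2).
  assert (Tm : T m) by (unfold T, m; lra).
  destruct (classic (forall eps, 0 < eps -> exists t, T t /\ q t < z + eps)) as [A|A];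
  destruct (classic (forall eps, 0 < eps -> exists t, T t /\ z - eps < q t)) as [B|B].
  - exists z. split; [intros; lra|]. split; auto.
  -
    apply not_all_ex_not in B. destruct B as [e0 B]. apply imply_to_and in B. destruct B as [He0 B].
    assert (Bt : forall t, T t -> q t <= z - e0).
    { intros t Ht. apply Rnot_lt_le. intro. apply B. exists t. auto. }
    destruct (completeness (fun y => exists t, T t /\ y = q t)) as [H HH].
    { exists (z - e0). intros y [t [Ht ->]]. auto. }
    { exists (q m). exists m. auto. }
    destruct HH as [H1 H2].
    assert (Hz : H <= z - e0) by (apply H2; intros y [t [Ht ->]]; auto).
    exists H. split; [|split].
    + intros t Ht1 Ht2. assert (q t <= H) by (apply H1; exists t; split; [split|]; auto).
      assert (q t <= z - e0) by (apply Bt; split; auto). rewrite !Rabs_right by lra. lra.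
    + intros eps He. exists m. split; auto. assert (q m <= H) by (apply H1; exists m; auto). lra.
    + intros eps He. apply NNPP. intro Hn. assert (H <= H - eps); [|lra].
      apply H2. intros y [t [Ht ->]]. apply Rnot_lt_le. intro. apply Hn. exists t. auto.
  -
    apply not_all_ex_not in A. destruct A as [e0 A]. apply imply_to_and in A. destruct A as [He0 A].
    assert (At : forall t, T t -> z + e0 <= q t).
    { intros t Ht. apply Rnot_lt_le. intro. apply A. exists t. auto. }
    destruct (completeness (fun y => exists t, T t /\ y = - q t)) as [L HL].
    { exists (- (z + e0)). intros y [t [Ht ->]]. assert (z + e0 <= q t) by auto. lra. }
    { exists (- q m). exists m. auto. }
    destruct HL as [L1 L2].
    assert (Hz : L <= - (z + e0)) by (apply L2; intros y [t [Ht ->]]; assert (z + e0 <= q t) by auto; lra).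
    exists (- L). split; [|split].
    + intros t Ht1 Ht2. assert (- q t <= L) by (apply L1; exists t; split; [split|]; auto).
      assert (z + e0 <= q t) by (apply At; split; auto). rewrite !Rabs_left1 by lra. lra.
    + intros eps He. apply NNPP. intro Hn. assert (L <= L - eps); [|lra].
      apply L2. intros y [t [Ht ->]]. apply Rnot_lt_le. intro. apply Hn. exists t. split; auto. lra.
    + intros eps He. exists m. split; auto. assert (- q m <= L) by (apply L1; exists m; auto). lra.
  - apply not_all_ex_not in A. destruct A as [e0 A]. apply imply_to_and in A. destruct A as [He0 A].
    apply not_all_ex_not in B. destruct B as [e1 B]. apply imply_to_and in B. destruct B as [He1 B].
    exfalso. destruct (Rle_dec (q m) z).
    + apply A. exists m. split; auto. lra.
    + apply B. exists m. split; auto. lra.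
Qed.

Lemma supp_closed F x : is_cdf F -> (forall eps, 0 < eps -> exists w, supp F w /\ Rabs (w - x) < eps) -> supp F x.
Proof.
  intros [Hm _] H eps He. destruct (H (eps/2) ltac:(lra)) as [w [Hw Hwx]].
  assert (A := Hw (eps/2) ltac:(lra)). apply Rabs_def2 in Hwx.
  assert (F (x - eps) <= F (w - eps/2)) by (apply Hm; lra).
  assert (F (w + eps/2) <= F (x + eps)) by (apply Hm; lra). lra.
Qed.

Lemma good_convex r F p i : 1 <= r -> is_cdf F -> finite_moment r F -> connected_set (supp F) -> cellok p i ->
  exists xi, Good r F p i xi.
Proof.
  intros Hr HF HM Hconn Hc. assert (Hq := quantile_mono F HF).
  destruct (J_min r F p i Hr HF HM Hc) as [zm Hzm].
  destruct (hull F p i zm HF Hc) as [x [H1 [H2 H3]]].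
  assert (Jx : J r F p i x <= J r F p i zm).
  { apply J_le; auto. intros t Ht1 Ht2. unfold G. apply powr_mono; [lra|]. apply H1; auto. }
  exists x. split; [|split; [|split]].
  - intros s Hs Hsi. apply Rle_plus_epsilon. intros eps He. destruct (H2 eps He) as [t [[Ht1 Ht2] Ht]].
    assert (quantile F s <= quantile F t) by (apply Hq; lra). lra.
  - intros s Hs Hsi. apply Rle_plus_epsilon. intros eps He. destruct (H3 eps He) as [t [[Ht1 Ht2] Ht]].
    assert (quantile F t <= quantile F s) by (apply Hq; lra). lra.
  - apply supp_closed; auto. intros eps He.
    destruct (H2 eps He) as [t1 [[T1 T1'] Ht1]]. destruct (H3 eps He) as [t2 [[T2 T2'] Ht2]].
    destruct (Rlt_dec x (quantile F t1)).
    + exists (quantile F t1). split; [apply quantile_supp; auto|]. apply Rabs_def1; lra.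
    + destruct (Rlt_dec (quantile F t2) x).
      * exists (quantile F t2). split; [apply quantile_supp; auto|]. apply Rabs_def1; lra.
      * exists x. split; [|rewrite Rminus_diag_eq, Rabs_R0; auto].
        apply (Hconn (quantile F t1) (quantile F t2)); try (apply quantile_supp; auto). lra.
  - intros z al be eps Hal Hab Hbe Hal0 Hbe1 He.
    destruct (J_approx r F p i z eps Hr HF HM Hc He) as [u [v [Huv Hi]]].
    exists u, v. destruct Huv as [U1 [U2 [U3 [U4 U5]]]]. repeat split; auto.
    assert (RInt (G r (quantile F) x) al be <= J r F p i x) by (apply J_elem; auto; repeat split; auto).
    assert (J r F p i zm <= J r F p i z) by apply Hzm. lra.
Qed.

Lemma good_r1 F p i : is_cdf F -> cellok p i -> exists xi, Good 1 F p i xi.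
Proof.
  intros HF [C1 [C2 C3]]. assert (Hq := quantile_mono F HF).
  set (m := (sumR i p + sumR (S i) p) / 2).
  exists (quantile F m). split; [|split; [|split]].
  - intros s Hs Hsi. apply Hq; unfold m; lra.
  - intros s Hs Hsi. apply Hq; unfold m; lra.
  - apply quantile_supp; auto. unfold m; lra.
  - apply opt_r1; auto.
Qed.

Fixpoint minpre (z : nat -> R) (k : nat) : R :=
  match k with O => z O | S k' => Rmin (minpre z k') (z (S k')) end.
Fixpoint maxpre (z : nat -> R) (k : nat) : R :=
  match k with O => z O | S k' => Rmax (maxpre z k') (z (S k')) end.

Lemma minpre_le z k j : (j <= k)%nat -> minpre z k <= z j.
Proof.
  induction k; intros Hj.
  - assert (j = 0%nat) by lia. subst. simpl. lra.
  - simpl. destruct (Nat.eq_dec j (S k)) as [->|]. apply Rmin_r.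
    eapply Rle_trans; [apply Rmin_l|]. apply IHk; lia.
Qed.
Lemma maxpre_ge z k j : (j <= k)%nat -> z j <= maxpre z k.
Proof.
  induction k; intros Hj.
  - assert (j = 0%nat) by lia. subst. simpl. lra.
  - simpl. destruct (Nat.eq_dec j (S k)) as [->|]. apply Rmax_r.
    eapply Rle_trans; [|apply Rmax_l]. apply IHk; lia.
Qed.
Lemma maxpre_le z k c : (forall j, (j <= k)%nat -> z j <= c) -> maxpre z k <= c.
Proof.
  induction k; intros H; simpl. apply H; lia.
  apply Rmax_lub. apply IHk; intros; apply H; lia. apply H; lia.
Qed.
Lemma maxpre_mono z j k : (j <= k)%nat -> maxpre z j <= maxpre z k.
Proof.
  induction k; intros H.
  - assert (j = 0%nat) by lia. subst. lra.
  - destruct (Nat.eq_dec j (S k)) as [->|]; [lra|]. simpl. eapply Rle_trans; [apply IHk; lia|apply Rmax_l].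
Qed.

Lemma fin_sep n p x y : (forall i, (i < n)%nat -> 0 < p i -> x i <> y) ->
  exists d, 0 < d /\ forall i, (i < n)%nat -> 0 < p i -> d <= Rabs (x i - y).
Proof.
  induction n; intros H.
  - exists 1. split; [lra|]. intros; lia.
  - destruct IHn as [d0 [Hd0 H0]]. { intros; apply H; auto. }
    destruct (Rlt_dec 0 (p n)).
    + assert (Hn : x n <> y) by (apply H; auto).
      assert (Hpos : 0 < Rabs (x n - y)) by (apply Rabs_pos_lt; intro; apply Hn; lra).
      exists (Rmin d0 (Rabs (x n - y))). split. apply Rmin_pos; auto.
      intros i Hi Hpi. destruct (Nat.eq_dec i n) as [->|]. apply Rmin_r.
      eapply Rle_trans; [apply Rmin_l|]. apply H0; auto; lia.
    + exists d0. split; auto. intros i Hi Hpi. destruct (Nat.eq_dec i n) as [->|]. lra. apply H0; auto; lia.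
Qed.

Lemma disc_supp n p x y : in_Pi n p -> supp (discrete_cdf n p x) y -> exists i, (i < n)%nat /\ 0 < p i /\ x i = y.
Proof.
  intros Hp Hs. apply NNPP. intro Hn.
  destruct (fin_sep n p x y) as [d [Hd Hsep]].
  { intros i Hi Hpi E. apply Hn. exists i. auto. }
  assert (A := Hs (d/2) ltac:(lra)).
  assert (discrete_cdf n p x (y - d/2) = discrete_cdf n p x (y + d/2)); [|lra].
  unfold discrete_cdf. apply sumR_ext. intros i Hi.
  destruct (Rlt_dec 0 (p i)).
  - assert (B := Hsep i Hi r). destruct (Rle_dec (x i) y).
    + rewrite Rabs_left1 in B by lra. destruct (Rle_dec (x i) (y - d/2)); destruct (Rle_dec (x i) (y + d/2)); lra.
    + rewrite Rabs_right in B by lra. destruct (Rle_dec (x i) (y - d/2)); destruct (Rle_dec (x i) (y + d/2)); lra.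
  - assert (0 <= p i) by (apply (proj1 Hp); auto).
    assert (p i = 0) by lra. destruct (Rle_dec (x i) (y - d/2)); destruct (Rle_dec (x i) (y + d/2)); lra.
Qed.

Theorem proposition5 (r : R) (F : R -> R) (n : nat) (p : nat -> R) :
  1 <= r -> is_cdf F -> finite_moment r F -> in_Pi n p ->
  (r = 1 \/ connected_set (supp F)) ->
  exists x : nat -> R,
    in_Xi n x /\ is_minimizer r F n p x /\
    (forall y, supp (discrete_cdf n p x) y -> supp F y).
Proof.
  intros Hr HF HM Hp Hcase.
  assert (Hcell : forall i, (i < n)%nat -> 0 < p i -> cellok p i).
  { intros i Hi Hpi. split; [|split].
    - apply sumR_nonneg. intros; apply (proj1 Hp); lia.
    - rewrite <- (proj2 Hp). apply (sumR_mono n); auto; lia.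
    - change (sumR (S i) p) with (sumR i p + p i). lra. }
  assert (HG : forall i, exists xi, (i < n)%nat -> 0 < p i -> Good r F p i xi).
  { intros i. destruct (lt_dec i n) as [Hi|Hi]; [destruct (Rlt_dec 0 (p i)) as [Hpi|Hpi]|].
    - destruct Hcase as [->|Hc].
      + destruct (good_r1 F p i HF (Hcell i Hi Hpi)) as [xi Hxi]. exists xi; auto.
      + destruct (good_convex r F p i Hr HF HM Hc (Hcell i Hi Hpi)) as [xi Hxi]. exists xi; auto.
    - exists 0. intros; lra.
    - exists 0. intros; lia. }
  set (z := fun i => epsilon (inhabits 0) (fun xi => (i < n)%nat -> 0 < p i -> Good r F p i xi)).
  assert (Hz : forall i, (i < n)%nat -> 0 < p i -> Good r F p i (z i)).
  { intros i. unfold z. apply epsilon_spec. apply HG. }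
  set (m0 := minpre z n).
  set (z' := fun j => if Rlt_dec 0 (p j) then z j else m0).
  set (x := maxpre z').
  assert (Hxz : forall i, (i < n)%nat -> 0 < p i -> x i = z i).
  { intros i Hi Hpi. apply Rle_antisym.
    - apply maxpre_le. intros j Hj. unfold z'. destruct (Rlt_dec 0 (p j)) as [Hpj|Hpj].
      + destruct (Nat.eq_dec j i) as [->|Hne]; [lra|].
        destruct (Hz j ltac:(lia) Hpj) as [_ [Mj _]]. destruct (Hz i Hi Hpi) as [Mi _].
        destruct (Hcell j ltac:(lia) Hpj) as [D1 [D2 D3]]. destruct (Hcell i Hi Hpi) as [E1 [E2 E3]].
        assert (sumR (S j) p <= sumR i p) by (apply (sumR_mono n); auto; lia).
        apply Rle_trans with (quantile F (sumR (S j) p)).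
        * apply Mj; lra.
        * apply Mi; lra.
      + unfold m0. apply minpre_le. lia.
    - replace (z i) with (z' i) by (unfold z'; destruct (Rlt_dec 0 (p i)); [auto|lra]).
      apply maxpre_ge; lia. }
  exists x. split; [|split].
  - intros i j [Hij Hj]. apply maxpre_mono; auto.
  - apply minimizer_of_Opt; auto.
    + intros i j [Hij Hj]. apply maxpre_mono; auto.
    + intros i Hi Hpi. rewrite Hxz by auto. apply (Hz i Hi Hpi).
  - intros y Hy. destruct (disc_supp n p x y Hp Hy) as [i [Hi [Hpi <-]]].
    rewrite Hxz by auto. apply (Hz i Hi Hpi).
Qed.
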